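(* Let $N\ge 2$, let $T_N$ be the homogeneous tree in which every vertex has degree $N$, and fix a root $o$. Let $m>1$ and $(p,q)\in G_3=\{(p,q): p<0,\ m-1<q<m\}$. Then for every $\epsilon>0$ there exists a weight $\mu$ on $T_N$ such that $$W_o(n)\asymp n^{\frac{q}{q-m+1}}(\ln n)^{\frac{m-1}{q-m+1}+\epsilon}\quad\text{for } n\ge 2,$$ and the inequality $\Delta_m u+u^p|\nabla u|^q\le 0$ on $T_N$ admits a nontrivial positive solution.
   Context: A weight on a graph $(V,E)$ is a symmetric function $\mu:V\times V\to[0,\infty)$ with $\mu_{xy}=\mu_{yx}>0$ if and only if $x\sim y$ (adjacent); $\mu(x)=\sum_{y\sim x}\mu_{xy}$. For $m>1$, $\Delta_m u(x)=\frac{1}{\mu(x)}\sum_{y\sim x}\mu_{xy}|u(y)-u(x)|^{m-2}(u(y)-u(x))$ and $|\nabla u(x)|=\big(\sum_{y\sim x}\frac{\mu_{xy}}{2\mu(x)}(u(y)-u(x))^2\big)^{1/2}$. $d$ is the graph distance, $B(o,n)=\{x: d(o,x)\le n\}$, $W_o(n)=\sum_{x\in B(o,n),\,y\in V,\,d(o,x)<d(o,y)}\mu_{xy}$. $f(n)\asymp g(n)$ for $n\ge2$ means there are constants $c,C>0$ with $c\,g(n)\le f(n)\le C\,g(n)$ for all $n\ge 2$. A nontrivial positive solution is a non-constant $u:V\to(0,\infty)$ with $\Delta_m u(x)+u(x)^p|\nabla u(x)|^q\le0$ for all $x\in V$. *)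

(* Defs.v *)
From HB Require Import structures.
From mathcomp Require Import all_boot all_order all_algebra.
From mathcomp Require Import all_classical all_reals all_analysis.
Set Implicit Arguments. Unset Strict Implicit. Unset Printing Implicit Defensive.
Import Order.TTheory GRing.Theory Num.Theory.
Local Open Scope ring_scope.

(* ---------- The homogeneous tree T_N ----------
   Vertices are finite words s = [a0; a1; ...; ak] with a0 < N and ai < N-1
   for i >= 1; the root o is the empty word.  The neighbours of s are its
   children  rcons s a  (a < N if s is the root, a < N-1 otherwise) and,
   if s is not the root, its parent (s with last letter removed).
   Hence every vertex has degree exactly N. *)

Definition validb (N : nat) (s : seq nat) : bool :=
  if s is a :: r then (a < N)%N && all (fun b => (b < N.-1)%N) r else true.

Definition vtx (N : nat) := {s : seq nat | validb N s}.

Definition nchild (N : nat) (s : seq nat) : nat :=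
  if s is [::] then N else N.-1.

Definition root (N : nat) : vtx N := exist (fun s => validb N s) [::] isT.

Definition nbrs (N : nat) (x : vtx N) : seq (vtx N) :=
  pmap insub
    ([seq rcons (val x) a | a <- iota 0 (nchild N (val x))] ++
     (if val x is [::] then [::] else [:: take (size (val x)).-1 (val x)])).

Definition adj (N : nat) (x y : vtx N) : bool := y \in nbrs x.

(* graph distance d(o,x) from the root o; in this tree it is the word length *)
Definition depth (N : nat) (x : vtx N) : nat := size (val x).

Fixpoint words (N : nat) (k : nat) : seq (seq nat) :=
  if k is k'.+1 then
    flatten [seq [seq rcons s a | a <- iota 0 (nchild N s)] | s <- words N k']
  else [:: [::]].

Definition ball (N : nat) (n : nat) : seq (vtx N) :=
  pmap insub (flatten [seq words N k | k <- iota 0 n.+1]).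

Section Weighted.
Variables (R : realType) (N : nat).

Definition is_weight (mu : vtx N -> vtx N -> R) : Prop :=
  (forall x y, mu x y = mu y x) /\
  (forall x y, 0 <= mu x y) /\
  (forall x y, 0 < mu x y <-> adj x y).

Definition muv (mu : vtx N -> vtx N -> R) (x : vtx N) : R :=
  \sum_(y <- nbrs x) mu x y.

(* W_o(n) = sum_{x in B(o,n), y in V, d(o,x) < d(o,y)} mu_xy
   (mu_xy = 0 unless y ~ x, so only neighbours contribute) *)
Definition W (mu : vtx N -> vtx N -> R) (n : nat) : R :=
  \sum_(x <- ball N n) \sum_(y <- nbrs x | (depth x < depth y)%N) mu x y.

Definition mlap (mu : vtx N -> vtx N -> R) (m : R) (u : vtx N -> R)
    (x : vtx N) : R :=
  (muv mu x)^-1 *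
  \sum_(y <- nbrs x) mu x y * (`|u y - u x| `^ (m - 2)) * (u y - u x).

Definition gradn (mu : vtx N -> vtx N -> R) (u : vtx N -> R) (x : vtx N) : R :=
  Num.sqrt (\sum_(y <- nbrs x) mu x y / (2 * muv mu x) * (u y - u x) ^+ 2).

End Weighted.

(* Main.v *)
Require Import Defs.
From HB Require Import structures.
From mathcomp Require Import all_boot all_order all_algebra.
From mathcomp Require Import all_classical all_reals all_analysis.
From mathcomp Require Import ring lra zify.
Import Order.TTheory GRing.Theory Num.Theory.
Local Open Scope ring_scope.
Set Implicit Arguments. Unset Strict Implicit. Unset Printing Implicit Defensive.

Lemma validb_rcons N t z : validb N (rcons t z) = validb N t && (z < nchild N t)%N.
Proof. case: t => [|a r] /=; first by rewrite andbT. by rewrite all_rcons; case: (a < N)%N; case: (z < N.-1)%N; rewrite /= ?andbT ?andbF. Qed.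

Lemma validb_take N s k : validb N s -> validb N (take k s).
Proof.
case: s => [|a r] //=; case: k => [|k] //= /andP[-> H] /=.
by apply/allP => b /mem_take /(allP H).
Qed.

Lemma words_prop N k s : s \in words N k -> validb N s /\ size s = k.
Proof.
elim: k s => [|k IH] s /=; first by rewrite inE => /eqP ->.
move=> /flattenP [l /mapP [t tin ->]] /mapP [a ain ->].
have [vt st] := IH _ tin.
rewrite validb_rcons vt size_rcons st; split => //.
by move: ain; rewrite mem_iota.
Qed.

Lemma sum_pmap_insub (R : realType) N (l : seq (seq nat)) (H : seq nat -> R) :
  all (validb N) l ->
  \sum_(y <- pmap (insub : _ -> option (vtx N)) l) H (val y) = \sum_(s <- l) H s.
Proof.
move=> al; rewrite big_pmap; apply: eq_big_seq => s sin.
by rewrite insubT ?(allP al) //=.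
Qed.

Lemma nbrs_valid N (x : vtx N) :
  all (validb N) ([seq rcons (val x) a | a <- iota 0 (nchild N (val x))] ++
     (if val x is [::] then [::] else [:: take (size (val x)).-1 (val x)])).
Proof.
rewrite all_cat; apply/andP; split.
  apply/allP => s /mapP [a]; rewrite mem_iota add0n => /andP[_ ha] ->.
  by rewrite validb_rcons (valP x) ha.
case: (val x) (valP x) => [|b r] //= H.
by rewrite andbT; apply: (@validb_take N (b :: r)).
Qed.

Lemma nbrs_sum (R : realType) N (x : vtx N) (H : seq nat -> R) :
  \sum_(y <- nbrs x) H (val y) =
  \sum_(a <- iota 0 (nchild N (val x))) H (rcons (val x) a) +
  (if val x is [::] then 0 else H (take (size (val x)).-1 (val x))).
Proof.
rewrite /nbrs sum_pmap_insub ?nbrs_valid // big_cat big_map /=.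
by case: (val x) => [|b r] /=; rewrite ?big_nil ?big_cons ?big_nil ?addr0.
Qed.

Lemma nbrs_sum_depth (R : realType) N (x : vtx N) (K : nat -> R) :
  \sum_(y <- nbrs x) K (depth y) =
  (nchild N (val x))%:R * K (depth x).+1 +
  (if depth x is 0 then 0 else K (depth x).-1).
Proof.
rewrite /depth (@nbrs_sum R N x (fun s => K (size s))).
under eq_bigr do rewrite size_rcons.
rewrite big_const_seq count_predT size_iota iter_addr_0 mulr_natl.
by case: (val x) => [|b r] //=; rewrite size_take /= ltnSn.
Qed.

Lemma parent_rcons (s : seq nat) a :
  (if rcons s a is [::] then [::] else [:: take (size (rcons s a)).-1 (rcons s a)])
  = [:: s].
Proof.
have E : take (size (rcons s a)).-1 (rcons s a) = s.
  by rewrite size_rcons /= -cats1 take_size_cat.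
move: E; case Er: (rcons s a) => [|c l]; first by case: s Er.
by move=> ->.
Qed.

Lemma adj_sym N (x y : vtx N) : adj x y = adj y x.
Proof.
suff H : forall x y : vtx N, adj x y -> adj y x.
  by apply/idP/idP; apply: H.
move=> {x y} [s vs] [t vt]; rewrite /adj /nbrs !mem_pmap_sub mem_cat /= => /orP[].
  move=> /mapP [a ain E]; subst t.
  by rewrite mem_cat parent_rcons inE eqxx orbT.
case: (lastP s) vs => [|s' z] // vs; rewrite parent_rcons inE => /eqP E; subst t.
rewrite mem_cat; apply/orP; left; apply/mapP; exists z => //.
by rewrite mem_iota add0n /=; move: vs; rewrite validb_rcons => /andP[].
Qed.

Definition nch (N k : nat) : nat := if k is 0 then N else N.-1.

Lemma nchild_nch N s : nchild N s = nch N (size s).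
Proof. by case: s. Qed.

Lemma size_wordsS N k : size (words N k.+1) = (size (words N k) * nch N k)%N.
Proof.
rewrite /= size_flatten /shape -map_comp sumnE big_map.
rewrite (eq_big_seq (fun _ => nch N k)); last first.
  by move=> s /words_prop [_ <-] /=; rewrite size_map size_iota nchild_nch.
by rewrite big_const_seq count_predT iter_addn_0 mulnC.
Qed.

Lemma size_words_gt0 N k : (1 < N)%N -> (0 < size (words N k))%N.
Proof.
move=> N1; elim: k => [|k IH] //; rewrite size_wordsS muln_gt0 IH /=.
by case: k {IH} => [|k] /=; rewrite ?(ltn_trans _ N1) // -subn1 subn_gt0.
Qed.

Lemma ball_sum (R : realType) N n (H : seq nat -> R) :
  \sum_(x <- Defs.ball N n) H (val x) = \sum_(k <- iota 0 n.+1) \sum_(s <- words N k) H s.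
Proof.
rewrite /Defs.ball sum_pmap_insub ?big_flatten ?big_map //.
apply/allP => s /flattenP [l /mapP [k _ ->]] /words_prop [] //.
Qed.

Definition wt (R : realType) N (E : nat -> R) k : R :=
  if k is k'.+1 then E k / (size (words N k))%:R else 0.

Definition muE (R : realType) N (E : nat -> R) (x y : vtx N) : R :=
  if adj x y then wt N E (maxn (depth x) (depth y)) else 0.

Lemma nch_wt (R : realType) N (E : nat -> R) k : (1 < N)%N ->
  (nch N k)%:R * wt N E k.+1 = E k.+1 / (size (words N k))%:R.
Proof.
move=> N1; rewrite /= size_wordsS natrM.
have h1 : (size (words N k))%:R != 0 :> R by rewrite pnatr_eq0 -lt0n size_words_gt0.
have h2 : (nch N k)%:R != 0 :> R.
  by rewrite pnatr_eq0; case: (k) => [|k'] /=; rewrite -?subn1 ?subn_eq0 -?ltnNge // gtn_eqF // ltnW.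
by field; rewrite h1 h2.
Qed.

Lemma nbrs_muE (R : realType) N (E : nat -> R) (x : vtx N) (G : nat -> R) :
  (1 < N)%N ->
  \sum_(y <- nbrs x) muE E x y * G (depth y) =
  (E (depth x).+1 * G (depth x).+1 +
   (if depth x is 0 then 0 else E (depth x) * G (depth x).-1)) /
  (size (words N (depth x)))%:R.
Proof.
move=> N1.
rewrite (eq_big_seq (fun y => (fun j => wt N E (maxn (depth x) j) * G j) (depth y))); last first.
  by move=> y yin; rewrite /muE /adj yin.
rewrite (nbrs_sum_depth x (fun j => wt N E (maxn (depth x) j) * G j)) /= nchild_nch -/(depth x) (maxn_idPr (leqnSn _)) mulrA nch_wt //.
case Ed: (depth x) => [|d] /=; first by rewrite !addr0 mulrAC.
by rewrite (maxn_idPl (leqnSn _)) mulrDl mulrAC; congr (_ + _); rewrite mulrAC.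
Qed.

Lemma W_muE (R : realType) N (E : nat -> R) n : (1 < N)%N ->
  W (@muE R N E) n = \sum_(k <- iota 0 n.+1) E k.+1.
Proof.
move=> N1; rewrite /W.
under eq_bigr => x _.
  rewrite big_mkcond /=.
  rewrite (eq_big_seq (fun y => (fun j => if (depth x < j)%N then wt N E (maxn (depth x) j) else 0) (depth y))); last first.
    by move=> y yin; rewrite /muE /adj yin.
  rewrite (nbrs_sum_depth x (fun j => if (depth x < j)%N then wt N E (maxn (depth x) j) else 0)) ltnSn (maxn_idPr (leqnSn _)).
  have -> : (if depth x is 0 then 0 else (if (depth x < (depth x).-1)%N then wt N E (maxn (depth x) (depth x).-1) else 0)) = 0 :> R.
    by case: (depth x) => [|d] //=; rewrite ltnNge leqnSn.
  rewrite addr0 nchild_nch /depth.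
  over.
rewrite (@ball_sum R N n (fun s => (nch N (size s))%:R * wt N E (size s).+1)).
apply: eq_big_seq => k _.
rewrite (eq_big_seq (fun _ => (nch N k)%:R * wt N E k.+1)); last first.
  by move=> s /words_prop [_ ->].
rewrite big_const_seq count_predT iter_addr_0 nch_wt // -mulr_natr.
have h1 : (size (words N k))%:R != 0 :> R by rewrite pnatr_eq0 -lt0n size_words_gt0.
by field.
Qed.

Lemma nbrs_muE0 (R : realType) N (E : nat -> R) (x : vtx N) (G : nat -> R) :
  (1 < N)%N -> E 0%N = 0 ->
  \sum_(y <- nbrs x) muE E x y * G (depth y) =
  (E (depth x).+1 * G (depth x).+1 + E (depth x) * G (depth x).-1) /
  (size (words N (depth x)))%:R.
Proof.
move=> N1 h0; rewrite nbrs_muE //.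
by case: (depth x) => [|d] //=; rewrite h0 mul0r.
Qed.

Lemma muv_muE (R : realType) N (E : nat -> R) (x : vtx N) :
  (1 < N)%N -> E 0%N = 0 ->
  muv (muE E) x = (E (depth x).+1 + E (depth x)) / (size (words N (depth x)))%:R.
Proof.
move=> N1 h0; rewrite /muv.
have := @nbrs_muE0 R N E x (fun _ => 1) N1 h0; rewrite !mulr1 => <-.
by apply: eq_bigr => y _; rewrite mulr1.
Qed.

Lemma mlap_muE (R : realType) N (E : nat -> R) (m : R) (U : nat -> R) (x : vtx N) :
  (1 < N)%N -> E 0%N = 0 -> E (depth x).+1 + E (depth x) != 0 ->
  mlap (muE E) m (fun y => U (depth y)) x =
  (E (depth x).+1 * (`|U (depth x).+1 - U (depth x)| `^ (m - 2) * (U (depth x).+1 - U (depth x))) +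
   E (depth x) * (`|U (depth x).-1 - U (depth x)| `^ (m - 2) * (U (depth x).-1 - U (depth x)))) /
  (E (depth x).+1 + E (depth x)).
Proof.
move=> N1 h0 hE; rewrite /mlap muv_muE //.
under eq_bigr do rewrite -mulrA.
rewrite (@nbrs_muE0 R N E x (fun j => `|U j - U (depth x)| `^ (m - 2) * (U j - U (depth x)))) //.
have hS : (size (words N (depth x)))%:R != 0 :> R.
  by rewrite pnatr_eq0 -lt0n size_words_gt0.
by field; rewrite hS hE.
Qed.

Lemma gradn_muE (R : realType) N (E : nat -> R) (U : nat -> R) (x : vtx N) :
  (1 < N)%N -> E 0%N = 0 -> E (depth x).+1 + E (depth x) != 0 ->
  gradn (muE E) (fun y => U (depth y)) x =
  Num.sqrt ((E (depth x).+1 * (U (depth x).+1 - U (depth x)) ^+ 2 +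
             E (depth x) * (U (depth x).-1 - U (depth x)) ^+ 2) /
            (2 * (E (depth x).+1 + E (depth x)))).
Proof.
move=> N1 h0 hE; rewrite /gradn muv_muE //; congr Num.sqrt.
under eq_bigr do rewrite mulrAC -mulrA.
set c := 2 * _.
rewrite (@nbrs_muE0 R N E x (fun j => (U j - U (depth x)) ^+ 2 / c)) //.
have hS : (size (words N (depth x)))%:R != 0 :> R.
  by rewrite pnatr_eq0 -lt0n size_words_gt0.
rewrite /c; field; rewrite hS hE //.
Qed.

Lemma adj_depth N (x y : vtx N) : adj x y -> (0 < maxn (depth x) (depth y))%N.
Proof.
case: x y => [s vs] [t vt]; rewrite /adj /nbrs mem_pmap_sub mem_cat /depth /= => /orP[].
  by move=> /mapP [a _ ->]; rewrite size_rcons leq_max orbT.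
by case: s vs => [|b r] //= _ _; rewrite leq_max.
Qed.

Lemma muE_weight (R : realType) N (E : nat -> R) :
  (1 < N)%N -> (forall k, (0 < k)%N -> 0 < E k) -> is_weight (@muE R N E).
Proof.
move=> N1 Ep.
have wp : forall k, (0 < k)%N -> 0 < wt N E k.
  case=> [|k] // _; rewrite /wt divr_gt0 ?Ep // ltr0n size_words_gt0 //.
split; [|split].
- by move=> x y; rewrite /muE adj_sym maxnC.
- by move=> x y; rewrite /muE; case: ifP => // h; rewrite ltW // wp // adj_depth.
- move=> x y; rewrite /muE; case: ifP => h; split => //.
  + by move=> _; rewrite wp // adj_depth.
  + by rewrite ltxx.
Qed.


Lemma powRE (R : realType) (a x : R) : 0 < a -> a `^ x = expR (x * ln a).
Proof. by move=> a0; rewrite /powR gt_eqF. Qed.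

Lemma ln_diff_ge (R : realType) (x y : R) : 0 < x -> 0 < y -> (y - x) / y <= ln y - ln x.
Proof.
move=> x0 y0.
have h : ln (1 + (x / y - 1)) <= x / y - 1 by apply: le_ln1Dx; have := divr_gt0 x0 y0; lra.
rewrite addrC subrK ln_div ?posrE // in h.
have -> : (y - x) / y = 1 - x / y by field; rewrite gt_eqF.
lra.
Qed.

Lemma decr_powN (R : realType) (x y r : R) : 0 < x -> x <= y -> 0 < r ->
  r * ((y - x) / y) * y `^ (- r) <= x `^ (- r) - y `^ (- r).
Proof.
move=> x0 xy r0; have y0 : 0 < y by apply: lt_le_trans xy.
have E : x `^ (- r) = y `^ (- r) * expR (r * (ln y - ln x)).
  by rewrite !powRE // -expRD; congr expR; ring.
rewrite E; have := expR_ge1Dx (r * (ln y - ln x)).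
have := ln_diff_ge x0 y0; have : 0 < y `^ (- r) by apply: powR_gt0.
move=> p0 h1 h2.
have h3 : r * ((y - x) / y) <= r * (ln y - ln x) by rewrite ler_pM2l.
nra.
Qed.

Lemma pow_le (R : realType) (x y r : R) : 0 <= r -> 0 <= x -> x <= y -> x `^ r <= y `^ r.
Proof. by move=> r0 x0 xy; apply: ge0_ler_powR => //; rewrite nnegrE (le_trans x0). Qed.

Lemma pow_leN (R : realType) (x y r : R) : r <= 0 -> 0 < x -> x <= y -> y `^ r <= x `^ r.
Proof.
move=> r0 x0 xy; have y0 : 0 < y by apply: lt_le_trans xy.
rewrite !powRE // ler_expR ler_wnM2l // ler_ln ?posrE //.
Qed.

Lemma powRM' (R : realType) (x y r : R) : 0 < x -> 0 < y -> (x * y) `^ r = x `^ r * y `^ r.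
Proof. by move=> x0 y0; rewrite powRM // ltW. Qed.

Lemma powRV (R : realType) (x r : R) : 0 < x -> (x ^-1) `^ r = (x `^ r)^-1.
Proof. by move=> x0; rewrite !powRE ?invr_gt0 // lnV ?posrE // mulrN expRN. Qed.

Lemma powRD' (R : realType) (x r t : R) : 0 < x -> x `^ (r + t) = x `^ r * x `^ t.
Proof. by move=> x0; rewrite powRD // (gt_eqF x0) implybT. Qed.

Lemma powRK' (R : realType) (x r : R) : r != 0 -> 0 <= x -> (x `^ r) `^ r^-1 = x.
Proof. by move=> r0 x0; rewrite -powRrM mulfV // powRr1. Qed.

Lemma expand4 (R : realType) (Q P b a : R) :
  (Q + P) * (b + a) = Q * b + Q * a + P * b + P * a.
Proof. ring. Qed.
Lemma expand3 (R : realType) (K c p : R) :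
  (3 + K) * c * p = c * p + c * p + K * (c * p) + c * p.
Proof. ring. Qed.

Section Conc.
Variables (R : realType) (m q eps : R).
Hypotheses (m1 : 1 < m) (qlo : m - 1 < q) (qhi : q < m) (eps0 : 0 < eps).

Definition sE := q - m + 1.
Definition gE := (m - 1) / sE.
Definition beE := gE + eps.
Definition delE := eps / gE.
Definition X (k : nat) : R := (k.+1)%:R.
Definition L (k : nat) : R := ln (X k).
Definition EE (k : nat) : R := if k is 0 then 0 else X k `^ gE * L k `^ beE.
Definition FF (k : nat) : R := if k is 0 then 0 else 2 - L 1 `^ delE * L k `^ (- delE).
Definition aa (k : nat) : R := if k is 0 then 0 else (FF k / EE k) `^ (m - 1)^-1.
Definition psi (k : nat) : R := (X k * L k `^ (1 + delE))^-1.

Lemma sE_gt0 : 0 < sE. Proof. rewrite /sE. move: qlo; lra. Qed.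
Lemma sE_lt1 : sE < 1. Proof. rewrite /sE; move: qhi; lra. Qed.
Lemma gE_gt0 : 0 < gE. Proof. by rewrite /gE divr_gt0 ?sE_gt0 // subr_gt0. Qed.
Lemma beE_gt0 : 0 < beE. Proof. by rewrite /beE addr_gt0 ?gE_gt0. Qed.
Lemma delE_gt0 : 0 < delE. Proof. by rewrite /delE divr_gt0 ?gE_gt0. Qed.
Lemma beE_div : beE / gE = 1 + delE.
Proof. by rewrite /beE /delE mulrDl mulfV // gt_eqF // gE_gt0. Qed.

Lemma X_ge1 k : 1 <= X k. Proof. by rewrite /X ler1n. Qed.
Lemma X_gt0 k : 0 < X k. Proof. by rewrite /X ltr0n. Qed.
Lemma X_ge2 k : (1 <= k)%N -> 2 <= X k. Proof. by move=> k1; rewrite /X ler_nat ltnS. Qed.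
Lemma X_S k : X k.+1 <= 2 * X k.
Proof. by rewrite /X -natrM ler_nat mul2n -addnn addSn ltnS leq_addl. Qed.
Lemma X_mono k k' : (k <= k')%N -> X k <= X k'.
Proof. by move=> h; rewrite /X ler_nat. Qed.

Lemma ln2_gt0 : 0 < ln (2 : R). Proof. by apply: ln_gt0; lra. Qed.
Lemma L_mono k k' : (k <= k')%N -> L k <= L k'.
Proof. by move=> h; rewrite /L ler_ln ?posrE ?X_gt0 ?X_mono. Qed.
Lemma L_ge k : (1 <= k)%N -> ln 2 <= L k.
Proof. by move=> h; rewrite /L ler_ln ?posrE ?X_gt0 ?X_ge2 //; lra. Qed.
Lemma L_gt0 k : (1 <= k)%N -> 0 < L k.
Proof. by move=> h; apply: lt_le_trans (L_ge h); exact: ln2_gt0. Qed.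
Lemma L_S k : (1 <= k)%N -> L k.+1 <= 2 * L k.
Proof.
move=> k1; rewrite /L mulr_natl -lnXn ?X_gt0 //.
rewrite ler_ln ?posrE ?X_gt0 ?exprn_gt0 ?X_gt0 // /X -natrX ler_nat.
by case: k k1 => [|k] // _; rewrite !expnS expn0 muln1; nia.
Qed.
Lemma L_diff k : (X k.+1)^-1 <= L k.+1 - L k.
Proof.
have := ln_diff_ge (X_gt0 k) (X_gt0 k.+1).
suff -> : (X k.+1 - X k) / X k.+1 = (X k.+1)^-1 by [].
by rewrite /X -natrB // subSnn mul1r.
Qed.

Lemma EE_gt0 k : (1 <= k)%N -> 0 < EE k.
Proof. by case: k => [|k] // _; rewrite /EE mulr_gt0 ?powR_gt0 ?X_gt0 ?L_gt0. Qed.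

Lemma EE_mono k k' : (1 <= k)%N -> (k <= k')%N -> EE k <= EE k'.
Proof.
case: k => [|k] // _; case: k' => [|k'] // h; rewrite /EE.
apply: ler_pM; rewrite ?powR_ge0 //.
  by apply: pow_le; rewrite ?(ltW gE_gt0) ?(ltW (X_gt0 _)) ?X_mono.
by apply: pow_le; rewrite ?(ltW beE_gt0) ?(ltW (L_gt0 _)) ?L_mono.
Qed.

Lemma EE_S k : (1 <= k)%N -> EE k.+1 <= 2 `^ (gE + beE) * EE k.
Proof.
case: k => [|k] // _; rewrite /EE.
have -> : 2 `^ (gE + beE) = 2 `^ gE * 2 `^ beE :> R by rewrite powRD'.
have h1 : X k.+2 `^ gE <= 2 `^ gE * X k.+1 `^ gE.
  rewrite -powRM' ?X_gt0 //; apply: pow_le; rewrite ?(ltW gE_gt0) ?(ltW (X_gt0 _)) ?X_S //.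
have h2 : L k.+2 `^ beE <= 2 `^ beE * L k.+1 `^ beE.
  rewrite -powRM' ?L_gt0 //; apply: pow_le; rewrite ?(ltW beE_gt0) ?(ltW (L_gt0 _)) ?L_S //.
rewrite mulrACA; apply: ler_pM; rewrite ?powR_ge0 //.
Qed.

Lemma FF_range k : (1 <= k)%N -> 1 <= FF k <= 2.
Proof.
case: k => [|k] // _; rewrite /FF.
have t0 : 0 < L 1 `^ delE * L k.+1 `^ (- delE) by rewrite mulr_gt0 ?powR_gt0 ?L_gt0.
have t1 : L k.+1 `^ (- delE) <= L 1 `^ (- delE).
  by apply: pow_leN; rewrite ?L_gt0 ?L_mono // oppr_le0 ltW // delE_gt0.
have e : L 1 `^ delE * L 1 `^ (- delE) = 1 by rewrite -powRD' ?L_gt0 // subrr powRr0.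
have t2 : L 1 `^ delE * L k.+1 `^ (- delE) <= 1.
  by rewrite -e ler_pM2l ?powR_gt0 ?L_gt0.
apply/andP; split; lra.
Qed.

Lemma FF1 : FF 1 = 1.
Proof. by rewrite /FF -powRD' ?L_gt0 // subrr powRr0; lra. Qed.

Lemma FF_step k : (1 <= k)%N ->
  L 1 `^ delE * delE / (2 * 2 `^ (1 + delE)) * psi k <= FF k.+1 - FF k.
Proof.
case: k => [|k] // _; rewrite /FF.
have d0 := delE_gt0.
have Lk := L_gt0 (ltn0Sn k); have Lk1 := L_gt0 (ltn0Sn k.+1).
have h := decr_powN Lk (L_mono (leqnSn k.+1)) d0.
have hd := L_diff k.+1.
have P0 : 0 < L k.+2 `^ (- delE) by apply: powR_gt0.
have step1 : delE * psi k.+2 <= L k.+1 `^ (- delE) - L k.+2 `^ (- delE).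
  apply: le_trans h; rewrite /psi powRD' // powRr1 ?(ltW Lk1) //.
  rewrite powRN.
  have Pd : 0 < L k.+2 `^ delE by apply: powR_gt0.
  have E1 : delE / (X k.+2 * (L k.+2 * L k.+2 `^ delE)) =
    delE * ((X k.+2)^-1 / L k.+2) * (L k.+2 `^ delE)^-1.
    by field; rewrite !gt_eqF ?X_gt0.
  rewrite E1 ler_pM2r ?invr_gt0 // ler_pM2l // ler_pM2r ?invr_gt0 //.
have step2 : psi k.+1 / (2 * 2 `^ (1 + delE)) <= psi k.+2.
  rewrite /psi -invfM lef_pV2 ?posrE ?mulr_gt0 ?powR_gt0 ?X_gt0 ?ltr0n //.
  rewrite mulrACA; apply: ler_pM; rewrite ?(ltW (X_gt0 _)) ?powR_ge0 // 1?mulrC ?X_S //.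
  rewrite mulrC -powRM' ?ltr0n ?L_gt0 //; apply: pow_le.
  - by rewrite addr_ge0 ?ler01 ?(ltW d0).
  - by rewrite ltW ?L_gt0.
  - by rewrite mulrC L_S.
have L10 : 0 < L 1 `^ delE by rewrite powR_gt0 ?L_gt0.
have -> : 2 - L 1 `^ delE * L k.+2 `^ (- delE) - (2 - L 1 `^ delE * L k.+1 `^ (- delE))
   = L 1 `^ delE * (L k.+1 `^ (- delE) - L k.+2 `^ (- delE)) by ring.
have -> : L 1 `^ delE * delE / (2 * 2 `^ (1 + delE)) * psi k.+1 =
  L 1 `^ delE * (delE * (psi k.+1 / (2 * 2 `^ (1 + delE)))) by ring.
rewrite ler_pM2l //; apply: le_trans step1.
by rewrite ler_pM2l.
Qed.

Lemma aa_gt0 k : (1 <= k)%N -> 0 < aa k.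
Proof.
case: k => [|k] // _; rewrite /aa powR_gt0 // divr_gt0 ?EE_gt0 //.
by case/andP: (FF_range (ltn0Sn k)) => h _; lra.
Qed.

Lemma EEa_m1 k : (1 <= k)%N -> EE k * aa k `^ (m - 1) = FF k.
Proof.
case: k => [|k] // _; rewrite /aa -powRrM mulVf ?powRr1; last by rewrite gt_eqF // subr_gt0.
  by field; rewrite gt_eqF ?EE_gt0.
rewrite divr_ge0 ?(ltW (EE_gt0 _)) //.
by case/andP: (FF_range (ltn0Sn k)) => h _; lra.
Qed.

Lemma EE_powV k r : (1 <= k)%N -> EE k `^ r = X k `^ (gE * r) * L k `^ (beE * r).
Proof.
case: k => [|k] // _; rewrite /EE powRM' ?powR_gt0 ?X_gt0 ?L_gt0 //.
by rewrite !powRrM.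
Qed.

Lemma EEa_q k : (1 <= k)%N -> EE k * aa k `^ q <= 2 `^ (1 + gE^-1) * psi k.
Proof.
move=> k1; have a0 := aa_gt0 k1; have E0 := EE_gt0 k1.
have [F1 F2] := andP (FF_range k1).
have -> : q = (m - 1) + sE by rewrite /sE; ring.
rewrite powRD' // mulrA EEa_m1 //.
have hs : aa k `^ sE = (FF k / EE k) `^ gE^-1.
  case: k k1 {a0 E0 F1 F2} => [|k] // _; rewrite /aa -powRrM; congr (_ `^ _).
  by rewrite /gE; field; rewrite !gt_eqF ?sE_gt0 // subr_gt0.
have h2 : (FF k / EE k) `^ gE^-1 <= (2 / EE k) `^ gE^-1.
  apply: pow_le; rewrite ?invr_ge0 ?(ltW gE_gt0) ?divr_ge0 ?(ltW E0) //; first lra.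
  by rewrite ler_pM2r ?invr_gt0.
have h3 : (2 / EE k) `^ gE^-1 = 2 `^ gE^-1 * psi k.
  rewrite powRM' ?invr_gt0 // powRV // EE_powV // mulfV ?gt_eqF ?gE_gt0 // powRr1 ?(ltW (X_gt0 _)) //.
  by rewrite /psi -beE_div.
rewrite hs powRD' // powRr1 // -mulrA; apply: ler_pM; rewrite ?powR_ge0 //; first lra.
by rewrite -h3.
Qed.

Lemma aa_bound k : (1 <= k)%N ->
  aa k <= 2 `^ (m - 1)^-1 * (L 1 `^ (beE / (m - 1)))^-1 * X k `^ (- sE^-1).
Proof.
case: k => [|k] // _; have E0 := EE_gt0 (ltn0Sn k).
have [F1 F2] := andP (FF_range (ltn0Sn k)).
have mp : 0 < m - 1 by rewrite subr_gt0.
rewrite /aa; apply: (@le_trans _ _ ((2 / EE k.+1) `^ (m - 1)^-1)).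
  apply: pow_le; rewrite ?invr_ge0 ?(ltW mp) ?divr_ge0 ?(ltW E0) //; first lra.
  by rewrite ler_pM2r ?invr_gt0.
rewrite powRM' ?invr_gt0 // powRV // EE_powV // -mulrA ler_pM2l ?powR_gt0 //.
have -> : gE * (m - 1)^-1 = sE^-1.
  by rewrite /gE; field; rewrite !gt_eqF ?sE_gt0.
rewrite invfM mulrC powRN; apply: ler_pM; rewrite ?invr_ge0 ?powR_ge0 //.
rewrite lef_pV2 ?posrE ?powR_gt0 ?L_gt0 //.
apply: pow_le; rewrite ?divr_ge0 ?(ltW beE_gt0) ?(ltW mp) ?(ltW (L_gt0 _)) ?L_mono //.
Qed.

Lemma sumX_bound d (r : R) : 0 < r ->
  \sum_(j < d) X j.+1 `^ (- (r + 1)) <= (1 - X d `^ (- r)) / r.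
Proof.
move=> r0; elim: d => [|d IH].
  by rewrite big_ord0 /X powR1 subrr mul0r.
rewrite big_ord_recr /=.
have h := decr_powN (X_gt0 d) (X_mono (leqnSn d)) r0.
have e : (X d.+1 - X d) / X d.+1 * X d.+1 `^ (- r) = X d.+1 `^ (- (r + 1)).
  rewrite /X -natrB // subSnn mul1r opprD powRD' ?ltr0n // powR_inv1 ?ler0n //.
  by rewrite mulrC.
rewrite -mulrA e in h.
have : X d.+1 `^ (- (r + 1)) <= (X d `^ (- r) - X d.+1 `^ (- r)) / r.
  by rewrite ler_pdivlMr // mulrC.
move: IH; rewrite !mulrBl; lra.
Qed.

Lemma sum_aa_bound d :
  \sum_(j < d) aa j.+1 <=
  2 `^ (m - 1)^-1 * (L 1 `^ (beE / (m - 1)))^-1 * (sE^-1 - 1)^-1.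
Proof.
have r0 : 0 < sE^-1 - 1.
  rewrite subr_gt0 invf_gt1 ?sE_gt0 ?sE_lt1 //.
set C := 2 `^ (m - 1)^-1 * (L 1 `^ (beE / (m - 1)))^-1.
have C0 : 0 <= C by rewrite mulr_ge0 ?invr_ge0 ?powR_ge0.
apply: (@le_trans _ _ (\sum_(j < d) C * X j.+1 `^ (- (sE^-1 - 1 + 1)))).
  by apply: ler_sum => j _; rewrite subrK aa_bound.
rewrite -mulr_sumr ler_wpM2l //.
apply: le_trans (sumX_bound d r0) _.
rewrite -[X in _ <= X]mul1r ler_pM2r ?invr_gt0 // gerBl powR_ge0 //.
Qed.

Lemma W_upper n : (2 <= n)%N ->
  \sum_(k <- iota 0 n.+1) EE k.+1 <=
  2 `^ (1 + gE + beE) * (n%:R `^ (1 + gE) * ln n%:R `^ beE).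
Proof.
move=> n2; have n0 : 0 < n%:R :> R by rewrite ltr0n (leq_trans _ n2).
have lnn : 0 < ln n%:R :> R by rewrite ln_gt0 // ltr1n.
apply: (@le_trans _ _ (\sum_(k <- iota 0 n.+1) EE n.+1)).
  rewrite !big_seq; apply: ler_sum => k; rewrite mem_iota => /andP[_ kn]; apply: EE_mono => //.
rewrite big_const_seq count_predT size_iota iter_addr_0 -[X in X <= _]mulr_natl.
rewrite /EE.
have hX : X n.+1 `^ gE <= 2 `^ gE * n%:R `^ gE.
  rewrite -powRM' ?n0 ?ltr0n //; apply: pow_le; rewrite ?(ltW gE_gt0) ?(ltW (X_gt0 _)) //.
  by rewrite /X -natrM ler_nat; lia.
have hL : L n.+1 `^ beE <= 2 `^ beE * ln n%:R `^ beE.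
  rewrite -powRM' ?n0 ?lnn ?ltr0n //; apply: pow_le; rewrite ?(ltW beE_gt0) ?(ltW (L_gt0 _)) //.
  rewrite /L mulr_natl -lnXn // ler_ln ?posrE ?X_gt0 ?exprn_gt0 // /X -natrX ler_nat.
  by rewrite expnS expn1; nia.
have hn : (n.+1)%:R <= 2 * n%:R :> R by rewrite -natrM ler_nat; lia.
have -> : 2 `^ (1 + gE + beE) * (n%:R `^ (1 + gE) * ln n%:R `^ beE) =
  (2 * n%:R) * ((2 `^ gE * n%:R `^ gE) * (2 `^ beE * ln n%:R `^ beE)) :> R.
  rewrite !powRD' // powRr1 ?ler0n // powRr1 //; ring.
apply: ler_pM; rewrite ?ler0n ?mulr_ge0 ?powR_ge0 //.
by apply: ler_pM; rewrite ?powR_ge0.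
Qed.

Lemma W_lower n : (2 <= n)%N ->
  (2 `^ (1 + gE + beE))^-1 * (n%:R `^ (1 + gE) * ln n%:R `^ beE) <=
  \sum_(k <- iota 0 n.+1) EE k.+1.
Proof.
move=> n2; have n0 : 0 < n%:R :> R by rewrite ltr0n (leq_trans _ n2).
have lnn : 0 < ln n%:R :> R by rewrite ln_gt0 // ltr1n.
set h := n./2.
have hh : n = (odd n + (h + h))%N by rewrite addnn odd_double_half.
have ob : (odd n <= 1)%N by case: (odd n).
have hn : (h <= n.+1)%N by lia.
rewrite -(subnKC hn) iotaD big_cat /= add0n.
have s1 : 0 <= \sum_(k <- iota 0 h) EE k.+1.
  by rewrite sumr_ge0 // => k _; rewrite ltW ?EE_gt0.
apply: (@le_trans _ _ (\sum_(k <- iota h (n.+1 - h)) EE k.+1)); last first.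
  by rewrite lerDr.
apply: (@le_trans _ _ (\sum_(k <- iota h (n.+1 - h)) EE h.+1)); last first.
  rewrite !big_seq; apply: ler_sum => k; rewrite mem_iota => /andP[hk _]; apply: EE_mono => //.
rewrite big_const_seq count_predT size_iota iter_addr_0 -[X in _ <= X]mulr_natl /EE.
have hX : (2 `^ gE)^-1 * n%:R `^ gE <= X h.+1 `^ gE.
  rewrite -powRV ?ltr0n // -powRM' ?n0 ?lnn ?invr_gt0 ?ltr0n //.
  apply: pow_le; rewrite ?(ltW gE_gt0) ?mulr_ge0 ?invr_ge0 ?ler0n //.
  rewrite ler_pdivrMl ?ltr0n // /X -natrM ler_nat; lia.
have hL : (2 `^ beE)^-1 * ln n%:R `^ beE <= L h.+1 `^ beE.
  rewrite -powRV ?ltr0n // -powRM' ?n0 ?lnn ?invr_gt0 ?ltr0n //.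
  apply: pow_le; rewrite ?(ltW beE_gt0) ?mulr_ge0 ?invr_ge0 ?ler0n ?(ltW lnn) //.
  rewrite ler_pdivrMl ?ltr0n // /L mulr_natl -lnXn ?X_gt0 // ler_ln ?posrE ?exprn_gt0 ?X_gt0 //.
  rewrite /X -natrX ler_nat expnS expn1; nia.
have hc : (2 : R)^-1 * n%:R <= (n.+1 - h)%:R.
  rewrite ler_pdivrMl ?ltr0n // -natrM ler_nat; lia.
have -> : (2 `^ (1 + gE + beE))^-1 * (n%:R `^ (1 + gE) * ln n%:R `^ beE) =
  ((2 : R)^-1 * n%:R) * (((2 `^ gE)^-1 * n%:R `^ gE) * ((2 `^ beE)^-1 * ln n%:R `^ beE)) :> R.
  rewrite !powRD' // powRr1 ?ler0n // powRr1 //; field.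
  by rewrite !gt_eqF ?powR_gt0.
apply: ler_pM; rewrite ?mulr_ge0 ?invr_ge0 ?ler0n ?powR_ge0 //.
by apply: ler_pM; rewrite ?mulr_ge0 ?invr_ge0 ?powR_ge0.
Qed.

Lemma psi_S k : (1 <= k)%N -> psi k.+1 <= psi k.
Proof.
move=> k1; rewrite /psi lef_pV2 ?posrE ?mulr_gt0 ?X_gt0 ?powR_gt0 ?L_gt0 //.
apply: ler_pM; rewrite ?(ltW (X_gt0 _)) ?powR_ge0 ?X_mono //.
apply: pow_le; rewrite ?(ltW (L_gt0 _)) ?L_mono //.
by rewrite addr_ge0 ?ler01 ?(ltW delE_gt0).
Qed.

Definition cc : R := 2 `^ (1 + gE^-1).
Definition KK : R := 2 `^ (gE + beE).
Definition kap : R :=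
  Num.min (L 1 `^ delE * delE / (2 * 2 `^ (1 + delE)) / ((3 + KK) * cc))
          (cc * psi 1)^-1.

Lemma kap_gt0 : 0 < kap.
Proof.
have d0 := delE_gt0; have L1 := L_gt0 (ltnSn 0).
rewrite /kap lt_min; apply/andP; split.
  have K0 : 0 < KK by rewrite powR_gt0.
  have c0 : 0 < cc by rewrite powR_gt0.
  apply: divr_gt0; first apply: divr_gt0.
  - by rewrite mulr_gt0 ?powR_gt0.
  - by rewrite mulr_gt0 ?powR_gt0 //; lra.
  - by rewrite mulr_gt0 //; lra.
by rewrite invr_gt0 mulr_gt0 ?powR_gt0 // /psi invr_gt0 mulr_gt0 ?X_gt0 ?powR_gt0.
Qed.

Lemma local_bound d (up : R) : 0 <= up -> up <= kap ->
  up * ((EE d + EE d.+1) * (aa d `^ q + aa d.+1 `^ q)) <= FF d.+1 - FF d.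
Proof.
move=> u0 uk; have q0 : q != 0 by rewrite gt_eqF //; move: qlo m1; lra.
have c0 : 0 < cc by rewrite powR_gt0.
case: d => [|d].
  rewrite FF1 (_ : FF 0 = 0) // (_ : EE 0 = 0) // (_ : aa 0 = 0) // subr0 add0r powR0 // add0r.
  have h := EEa_q (ltnSn 0).
  have up1 : up <= (cc * psi 1)^-1 by apply: le_trans uk _; rewrite /kap ge_min lexx orbT.
  have p1 : 0 < cc * psi 1 by rewrite mulr_gt0 // /psi invr_gt0 mulr_gt0 ?X_gt0 ?powR_gt0 ?L_gt0.
  apply: (@le_trans _ _ (up * (cc * psi 1))).
    by rewrite ler_wpM2l.
  by rewrite -ler_pdivlMr // div1r.
set k := d.+1; have k1 : (1 <= k)%N by [].
have hP := EEa_q (ltn0Sn k); have hQ := EEa_q k1.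
have EQP : EE k <= EE k.+1 by apply: EE_mono.
have EPQ : EE k.+1 <= KK * EE k by apply: EE_S.
have ps := psi_S k1.
have st := FF_step k1.
have a0 : 0 <= aa k `^ q by apply: powR_ge0.
have a1 : 0 <= aa k.+1 `^ q by apply: powR_ge0.
have E0 := EE_gt0 k1.
have K0 : 0 <= KK by apply: powR_ge0.
have ps0 : 0 <= psi k.+1 by rewrite /psi invr_ge0 mulr_ge0 ?powR_ge0 ?(ltW (X_gt0 _)).
have B : (EE k + EE k.+1) * (aa k `^ q + aa k.+1 `^ q) <= (3 + KK) * cc * psi k.
  have t1 : EE k * aa k.+1 `^ q <= EE k.+1 * aa k.+1 `^ q by exact: (ler_wpM2r a1 EQP).
  have t2 : EE k.+1 * aa k `^ q <= KK * (EE k * aa k `^ q).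
    by rewrite mulrA; exact: (ler_wpM2r a0 EPQ).
  have t3 : KK * (EE k * aa k `^ q) <= KK * (cc * psi k) by exact: (ler_wpM2l K0 hQ).
  have t4 : cc * psi k.+1 <= cc * psi k by exact: (ler_wpM2l (ltW c0) ps).
  rewrite expand4 expand3.
  have hP' : EE k.+1 * aa k.+1 `^ q <= cc * psi k by apply: le_trans hP t4.
  exact: (lerD (lerD (lerD hQ (le_trans t1 hP')) (le_trans t2 t3)) hP').
have Ld : 0 < L 1 `^ delE * delE / (2 * 2 `^ (1 + delE)).
  apply: divr_gt0; first by rewrite mulr_gt0 ?powR_gt0 ?L_gt0 ?delE_gt0.
  by rewrite mulr_gt0 ?powR_gt0 //; lra.
have up1 : up <= L 1 `^ delE * delE / (2 * 2 `^ (1 + delE)) / ((3 + KK) * cc).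
  by apply: le_trans uk _; rewrite /kap ge_min lexx.
have pk0 : 0 < psi k by rewrite /psi invr_gt0 mulr_gt0 ?X_gt0 ?powR_gt0 ?L_gt0.
have three : (0 : R) < 3 by rewrite ltr0n.
have two : (0 : R) < 2 by rewrite ltr0n.
have Kp : 0 < KK by apply: powR_gt0; exact: two.
have K3 : 0 < 3 + KK by exact: (addr_gt0 three Kp).
have KC : 0 < (3 + KK) * cc by exact: (mulr_gt0 K3 c0).
apply: le_trans st; apply: (@le_trans _ _ (up * ((3 + KK) * cc * psi k))).
  exact: (ler_wpM2l u0 B).
rewrite mulrA; apply: ler_wpM2r; first exact: ltW pk0.
by rewrite -ler_pdivlMr.
Qed.
End Conc.


Lemma sqrt_le_max (R : realType) (P Q al be M : R) : 0 < P -> 0 <= Q ->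
  0 <= al -> 0 <= be -> al <= M -> be <= M ->
  Num.sqrt ((P * al ^+ 2 + Q * be ^+ 2) / (2 * (P + Q))) <= M.
Proof.
move=> P0 Q0 a0 b0 aM bM.
have M0 : 0 <= M by apply: le_trans aM.
rewrite -(ger0_norm M0) -sqrtr_sqr; apply: ler_wsqrtr.
have a2 : al ^+ 2 <= M ^+ 2 by rewrite ler_sqr ?nnegrE.
have b2 : be ^+ 2 <= M ^+ 2 by rewrite ler_sqr ?nnegrE.
have PQ : 0 < 2 * (P + Q) by apply: mulr_gt0; [rewrite ltr0n | apply: ltr_wpDr].
rewrite ler_pdivrMr //.
have t1 : P * al ^+ 2 <= P * M ^+ 2 by exact: (ler_wpM2l (ltW P0) a2).
have t2 : Q * be ^+ 2 <= Q * M ^+ 2 by exact: (ler_wpM2l Q0 b2).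
have m2 : 0 <= M ^+ 2 by apply: sqr_ge0.
have t3 : 0 <= (P + Q) * M ^+ 2 by apply: mulr_ge0 => //; apply: addr_ge0 => //; apply: ltW.
have -> : M ^+ 2 * (2 * (P + Q)) = P * M ^+ 2 + Q * M ^+ 2 + (P + Q) * M ^+ 2 by ring.
exact: (ler_wpDr t3 (lerD t1 t2)).
Qed.

Lemma sqrt_pow_bound (R : realType) (P Q al be q : R) : 0 < P -> 0 <= Q ->
  0 <= al -> 0 <= be -> 0 < q ->
  Num.sqrt ((P * al ^+ 2 + Q * be ^+ 2) / (2 * (P + Q))) `^ q <= be `^ q + al `^ q.
Proof.
move=> P0 Q0 a0 b0 q0.
have s0 := sqrtr_ge0 ((P * al ^+ 2 + Q * be ^+ 2) / (2 * (P + Q))).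
have pa := powR_ge0 al q; have pb := powR_ge0 be q.
case: (leP al be) => h.
  have := sqrt_le_max P0 Q0 a0 b0 h (lexx be) => hs.
  apply: le_trans (pow_le (ltW q0) s0 hs) _.
  exact: (ler_wpDr pa (lexx _)).
have := sqrt_le_max P0 Q0 a0 b0 (lexx al) (ltW h) => hs.
apply: le_trans (pow_le (ltW q0) s0 hs) _.
exact: (ler_wpDl pb (lexx _)).
Qed.

Lemma phi_pos (R : realType) (m t : R) : 1 < m -> 0 <= t ->
  `|t| `^ (m - 2) * t = t `^ (m - 1).
Proof.
move=> m1 t0; rewrite ger0_norm // mulrC.
have -> : m - 2 = m - 1 - 1 by ring.
by rewrite mulr_powRB1 // subr_gt0.
Qed.

Section Main.
Variables (R : realType) (N : nat) (m p q eps : R).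
Hypotheses (N2 : (2 <= N)%N) (m1 : 1 < m) (p0 : p < 0) (qlo : m - 1 < q)
  (qhi : q < m) (eps0 : 0 < eps).

Lemma main_sec :
  exists mu : vtx N -> vtx N -> R,
    is_weight mu /\
    (exists c C : R, 0 < c /\ 0 < C /\
      forall n : nat, (2 <= n)%N ->
        c * ((n%:R `^ (q / (q - m + 1))) *
             (ln n%:R `^ ((m - 1) / (q - m + 1) + eps))) <= W mu n /\
        W mu n <= C * ((n%:R `^ (q / (q - m + 1))) *
             (ln n%:R `^ ((m - 1) / (q - m + 1) + eps)))) /\
    (exists u : vtx N -> R,
       (forall x, 0 < u x) /\
       (exists x y, u x != u y) /\
       (forall x, mlap mu m u x + u x `^ p * gradn mu u x `^ q <= 0)).
Proof.
pose E := EE m q eps.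
have E0 : E 0%N = 0 by [].
have Ep : forall k, (0 < k)%N -> 0 < E k by move=> k hk; exact: EE_gt0.
have two : (0 : R) < 2 by rewrite ltr0n.
exists (@muE R N E); split; first exact: muE_weight.
split.
  set C := 2 `^ (1 + gE m q + beE m q eps).
  have C0 : 0 < C by apply: powR_gt0.
  exists C^-1, C; split; first by rewrite invr_gt0.
  split => // n n2; rewrite W_muE //.
  have e1 : q / (q - m + 1) = 1 + gE m q.
    rewrite /gE /sE; field; apply: lt0r_neq0; move: qlo; lra.
  have e2 : (m - 1) / (q - m + 1) + eps = beE m q eps by [].
  rewrite e1 e2; split; [exact: W_lower | exact: W_upper].
have hA := sum_aa_bound m1 qlo qhi eps0.
set A := (X in forall d, _ <= X) in hA.
have kap0 := kap_gt0 m1 qlo eps0.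
set K0 := kap m q eps `^ p^-1.
have K0p : 0 < K0 by apply: powR_gt0.
pose U j := K0 + A - \sum_(i < j) aa m q eps i.+1.
have Ud : forall d, K0 <= U d.
  by move=> d; rewrite /U -addrA lerDl subr_ge0.
have upk : forall d, U d `^ p <= kap m q eps.
  move=> d; apply: (@le_trans _ _ (K0 `^ p)).
    by apply: pow_leN => //; apply: ltW.
  rewrite /K0 -powRrM mulVf; last exact: ltr0_neq0 p0.
  by rewrite powRr1; last exact: ltW kap0.
exists (fun y => U (depth y)); split.
  by move=> x; apply: lt_le_trans K0p (Ud _).
split.
  have v1 : validb N [:: 0%N] by rewrite /= andbT (leq_trans _ N2).
  exists (Defs.root N), (exist _ [:: 0%N] v1).
  rewrite /depth /= /U big_ord0 big_ord1 subr0.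
  have a1 : 0 < aa m q eps (nat_of_ord (@ord0 0)).+1 := aa_gt0 m1 qlo eps0 (ltn0Sn 0).
  apply/eqP => h; move: a1 h; lra.
move=> x.
have Ege : forall k, 0 <= E k.
  by case=> [|k]; [exact: lexx | exact: ltW (Ep _ (ltn0Sn k))].
have hE : E (depth x).+1 + E (depth x) != 0.
  apply: lt0r_neq0; apply: ltr_wpDr; [exact: Ege | exact: Ep].
rewrite (mlap_muE m U N2 E0 hE) (gradn_muE U N2 E0 hE).
move: hE (upk (depth x)); move: (depth x) => d hE upd.
have dS : U d.+1 - U d = - aa m q eps d.+1.
  by rewrite /U big_ord_recr /=; ring.
have dP : U d.-1 - U d = aa m q eps d.
  case: d {hE upd dS} => [|d] /=; first by rewrite subrr.
  by rewrite /U big_ord_recr /=; ring.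
rewrite dS dP sqrrN normrN.
have al0 : 0 < aa m q eps d.+1 := aa_gt0 m1 qlo eps0 (ltn0Sn d).
have be0 : 0 <= aa m q eps d.
  by case: d {hE upd dS dP al0} => [|d]; [exact: lexx | apply: ltW; apply: aa_gt0].
rewrite mulrN (phi_pos m1 (ltW al0)) (phi_pos m1 be0).
have h1 : E d.+1 * aa m q eps d.+1 `^ (m - 1) = FF m q eps d.+1 :=
  EEa_m1 m1 qlo eps0 (ltn0Sn d).
rewrite mulrN h1.
have hd : E d * aa m q eps d `^ (m - 1) = FF m q eps d.
  case: d {hE upd dS dP al0 be0 h1} => [|d]; first by rewrite E0 mul0r.
  exact: (EEa_m1 m1 qlo eps0 (ltn0Sn d)).
rewrite hd.
have Es : 0 < E d.+1 + E d.
  apply: ltr_wpDr; [exact: Ege | exact: Ep].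
have Ed0 : 0 <= E d := Ege d.
have q0 : 0 < q by move: qlo m1; lra.
have G := sqrt_pow_bound (Ep _ (ltn0Sn d)) Ed0 (ltW al0) be0 q0.
set G0 := Num.sqrt _ `^ q in G *.
set up := U d `^ p.
have up0 : 0 <= up by apply: powR_ge0.
have lb := local_bound m1 qlo qhi eps0 d up0 upd.
have key : up * G0 * (E d.+1 + E d) <= FF m q eps d.+1 - FF m q eps d.
  apply: le_trans lb.
  apply: (le_trans (ler_wpM2r (ltW Es) (ler_wpM2l up0 G))).
  rewrite le_eqVlt; apply/orP; left; apply/eqP; rewrite /E; ring.
have key2 : up * G0 <= (FF m q eps d.+1 - FF m q eps d) / (E d.+1 + E d).
  by rewrite ler_pdivlMr.
have -> : (- FF m q eps d.+1 + FF m q eps d) / (E d.+1 + E d) =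
  - ((FF m q eps d.+1 - FF m q eps d) / (E d.+1 + E d)) by ring.
move: key2; lra.
Qed.
End Main.

Theorem mainTheorem10 (R : realType) (N : nat) (m p q eps : R) :
  (2 <= N)%N -> 1 < m -> p < 0 -> m - 1 < q -> q < m -> 0 < eps ->
  exists mu : vtx N -> vtx N -> R,
    is_weight mu /\
    (exists c C : R, 0 < c /\ 0 < C /\
      forall n : nat, (2 <= n)%N ->
        c * ((n%:R `^ (q / (q - m + 1))) *
             (ln n%:R `^ ((m - 1) / (q - m + 1) + eps))) <= W mu n /\
        W mu n <= C * ((n%:R `^ (q / (q - m + 1))) *
             (ln n%:R `^ ((m - 1) / (q - m + 1) + eps)))) /\
    (exists u : vtx N -> R,
       (forall x, 0 < u x) /\
       (exists x y, u x != u y) /\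
       (forall x, mlap mu m u x + u x `^ p * gradn mu u x `^ q <= 0)).
Proof.
move=> N2 m1 p0 qlo qhi eps0.
exact: (main_sec N2 m1 p0 qlo qhi eps0).
Qed.
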